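(* Consider the multi-sender unicast index-coding instance with $N=4$ messages, $K=2$ senders with $\mathcal S_1=\{1,2,3\}$, $\mathcal S_2=\{2,3,4\}$, link capacities $C_1=C_2=1$, and receiver side information $\mathcal A_1=\{4\}$, $\mathcal A_2=\{1,3\}$, $\mathcal A_3=\{1,2\}$, $\mathcal A_4=\{2,3\}$. Its capacity region is $$\mathcal C=\{(R_1,R_2,R_3,R_4)\in\mathbb R_+^4: R_1\le1,\ R_4\le1,\ R_1+R_2\le2,\ R_1+R_3\le2,\ R_2+R_4\le2,\ R_3+R_4\le2\}.$$
   Context: Model. $N$ independent messages $M_1,\dots,M_N$, $M_j$ uniform on $[1:2^{nR_j}]$ ($n$ the block length). Sender $k$ knows the messages $M_i$, $i\in\mathcal S_k$, and sends an index $L_k=f_k((M_i)_{i\in\mathcal S_k})\in[1:2^{nC_k})=\{1,\dots,2^{\lfloor nC_k\rfloor}\}$ over a noiseless broadcast link reaching all receivers. Receiver $j$ knows $M_i$, $i\in\mathcal A_j$, and must output an estimate $\hat M_j=g_j(L_1,\dots,L_K,(M_i)_{i\in\mathcal A_j})$ of $M_j$. A rate tuple is achievable if there exist such codes with $\Pr[(\hat M_1,\dots,\hat M_N)\ne(M_1,\dots,M_N)]\to0$ as $n\to\infty$; the capacity region $\mathcal C$ is the closure of the set of achievable rate tuples. *)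

(* Defs.v *)
From Stdlib Require Import Reals Lra Lia ZArith Arith List.
Import ListNotations.
Open Scope R_scope.

(* Indices are 0-based: message j (paper) is index j-1 here. *)

Definition ceilZ (x : R) : Z := (- Int_part (- x))%Z.
Definition floorZ (x : R) : Z := Int_part x.

(* |[1:2^{nR}]| = 2^{ceil(nR)} ;  |[1:2^{nC})| = 2^{floor(nC)} *)
Definition msg_size (n : nat) (r : R) : nat := (2 ^ Z.to_nat (ceilZ (INR n * r)))%nat.
Definition link_size (n : nat) (c : R) : nat := (2 ^ Z.to_nat (floorZ (INR n * c)))%nat.

(* all tuples (m_0,...,m_{N-1}) with m_j < s_j (message m_j stands for m_j+1) *)
Fixpoint tuples (s : list nat) : list (list nat) :=
  match s with
  | [] => [[]]
  | a :: s' => flat_map (fun x => map (cons x) (tuples s')) (seq 0 a)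
  end.

Definition restrict (I : list nat) (m : list nat) : list nat :=
  map (fun i => nth i m 0%nat) I.

Record ICInstance := {
  ic_N : nat;
  ic_K : nat;
  ic_S : list (list nat);
  ic_C : list R;
  ic_A : list (list nat)
}.

Definition msg_sizes (n : nat) (Rs : list R) : list nat := map (msg_size n) Rs.

(* Encoder k (block length n) sees only (m_i)_{i in S_k};
   decoder j sees all indices L_1..L_K and (m_i)_{i in A_j}. *)
Definition Encoders := nat -> nat -> list nat -> nat.
Definition Decoders := nat -> nat -> list nat -> list nat -> nat.

Definition sent (P : ICInstance) (enc : Encoders) (n : nat) (m : list nat) : list nat :=
  map (fun k => enc n k (restrict (nth k (ic_S P) []) m)) (seq 0 (ic_K P)).

Definition encoders_valid (P : ICInstance) (Rs : list R) (enc : Encoders) (n : nat) : Prop :=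
  forall k m, (k < ic_K P)%nat -> In m (tuples (msg_sizes n Rs)) ->
    Nat.lt (enc n k (restrict (nth k (ic_S P) []) m)) (link_size n (nth k (ic_C P) 0%R)).

Definition decoding_error (P : ICInstance) (enc : Encoders) (dec : Decoders) (n : nat)
  (m : list nat) : bool :=
  existsb (fun j => negb (Nat.eqb (dec n j (sent P enc n m) (restrict (nth j (ic_A P) []) m))
                                  (nth j m 0%nat)))
          (seq 0 (ic_N P)).

(* Pr[(hat M) <> M] under uniform independent messages *)
Definition error_prob (P : ICInstance) (Rs : list R) (enc : Encoders) (dec : Decoders)
  (n : nat) : R :=
  INR (length (filter (decoding_error P enc dec n) (tuples (msg_sizes n Rs))))
  / INR (length (tuples (msg_sizes n Rs))).

Definition achievable (P : ICInstance) (Rs : list R) : Prop :=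
  length Rs = ic_N P /\ (forall r, In r Rs -> 0 <= r) /\
  exists (enc : Encoders) (dec : Decoders),
    (forall n, encoders_valid P Rs enc n) /\
    Un_cv (error_prob P Rs enc dec) 0.

Definition in_capacity_region (P : ICInstance) (Rs : list R) : Prop :=
  length Rs = ic_N P /\
  forall eps, 0 < eps -> exists Rs', achievable P Rs' /\
    forall j, (j < ic_N P)%nat -> Rabs (nth j Rs 0 - nth j Rs' 0) < eps.

Definition instance3 : ICInstance := {|
  ic_N := 4; ic_K := 2;
  ic_S := [[0;1;2]; [1;2;3]]%nat;
  ic_C := [1; 1];
  ic_A := [[3]; [0;2]; [0;1]; [1;2]]%nat
|}.

(* Main.v *)
Require Import Defs.
From Stdlib Require Import Reals Lra Lia ZArith Arith List.
Import ListNotations.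
Open Scope R_scope.

Lemma in_flat_cons (T : list (list nat)) (l : list nat) m :
  In m (flat_map (fun x => map (cons x) T) l) <->
  exists x t, m = x :: t /\ In x l /\ In t T.
Proof.
  rewrite in_flat_map. split.
  - intros [x [Hx Hm]]. apply in_map_iff in Hm. destruct Hm as [t [<- Ht]].
    eauto.
  - intros [x [t [-> [Hx Ht]]]]. exists x. split; auto. apply in_map. auto.
Qed.

Lemma in_tuples_cons a s m :
  In m (tuples (a :: s)) <-> exists x t, m = x :: t /\ (x < a)%nat /\ In t (tuples s).
Proof.
  simpl. rewrite in_flat_cons. split.
  - intros [x [t [-> [Hx Ht]]]]. apply in_seq in Hx. exists x, t. split; auto. split; auto; lia.
  - intros [x [t [-> [Hx Ht]]]]. exists x, t. split; auto. split; auto. apply in_seq. lia.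
Qed.

Lemma in_tuples_nil m : In m (tuples []) <-> m = [].
Proof. simpl. intuition. Qed.

Lemma nodup_flat (T : list (list nat)) (l : list nat) :
  NoDup l -> NoDup T -> NoDup (flat_map (fun x => map (cons x) T) l).
Proof.
  intros Hl HT. induction Hl as [|x l Hx Hl IH]; simpl. constructor.
  apply NoDup_app; auto.
  - apply NoDup_map_NoDup_ForallPairs; auto. intros u v _ _ E. injection E; auto.
  - intros y Hy1 Hy2. apply in_map_iff in Hy1. destruct Hy1 as [t [<- _]].
    apply in_flat_cons in Hy2. destruct Hy2 as [x' [t' [E [Hx' _]]]].
    injection E; intros; subst. auto.
Qed.

Lemma nodup_tuples s : NoDup (tuples s).
Proof.
  induction s as [|a s IH]; simpl. constructor. intros []. constructor.
  apply nodup_flat; auto. apply seq_NoDup.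
Qed.

Lemma length_tuples s : length (tuples s) = fold_right Nat.mul 1%nat s.
Proof.
  induction s as [|a s IH]; simpl. reflexivity.
  rewrite (flat_map_constant_length (c := length (tuples s))).
  - rewrite length_seq, IH. reflexivity.
  - intros. apply length_map.
Qed.

Lemma in_tuples4 s1 s2 s3 s4 m :
  In m (tuples [s1;s2;s3;s4]) <-> exists a b c d, m = [a;b;c;d] /\
    (a < s1)%nat /\ (b < s2)%nat /\ (c < s3)%nat /\ (d < s4)%nat.
Proof.
  split.
  - intro H. repeat (apply in_tuples_cons in H; destruct H as [? [? [-> [? H]]]]).
    apply in_tuples_nil in H. subst. repeat eexists; eauto.
  - intros [a [b [c [d [-> [? [? [? ?]]]]]]]].
    repeat (apply in_tuples_cons; eexists; eexists; split; [reflexivity|split; [eassumption|]]).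
    apply in_tuples_nil. reflexivity.
Qed.

Lemma count_inj (l : list (list nat)) (good : list nat -> bool)
  (phi : list nat -> nat * list nat) (psi : nat * list nat -> list nat) (K : nat)
  (Rl : list (list nat)) :
  NoDup l ->
  (forall m, In m l -> good m = true ->
     psi (phi m) = m /\ (fst (phi m) < K)%nat /\ In (snd (phi m)) Rl) ->
  (length (filter good l) <= K * length Rl)%nat.
Proof.
  intros Hl H.
  rewrite <- (length_map phi). rewrite <- length_seq with (start := 0%nat) (len := K).
  rewrite <- length_prod. apply NoDup_incl_length.
  - apply NoDup_map_NoDup_ForallPairs; [|apply NoDup_filter; auto].
    intros x y Hx Hy E. apply filter_In in Hx, Hy.
    destruct (H x) as [Hx' _]; try tauto. destruct (H y) as [Hy' _]; try tauto.
    rewrite <- Hx', <- Hy', E. reflexivity.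
  - intros p Hp. apply in_map_iff in Hp. destruct Hp as [m [<- Hm]].
    apply filter_In in Hm. destruct (H m) as [_ [H1 H2]]; try tauto.
    destruct (phi m) as [u v] eqn:E. simpl in *. apply in_prod; auto. apply in_seq. lia.
Qed.
Lemma ceil_ge x : x <= IZR (ceilZ x).
Proof. unfold ceilZ. rewrite opp_IZR. destruct (base_Int_part (-x)). lra. Qed.

Lemma ceil_lt x : IZR (ceilZ x) < x + 1.
Proof. unfold ceilZ. rewrite opp_IZR. destruct (base_Int_part (-x)). lra. Qed.

Lemma INR_to_nat_ge z : IZR z <= INR (Z.to_nat z).
Proof.
  destruct (Z_le_gt_dec 0 z).
  - rewrite INR_IZR_INZ, Z2Nat.id by lia. lra.
  - apply Rle_trans with 0. apply IZR_le. lia. apply pos_INR.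
Qed.

Lemma INR_ceil_lt x : 0 <= x -> INR (Z.to_nat (ceilZ x)) < x + 1.
Proof.
  intro Hx. destruct (Z_le_gt_dec 0 (ceilZ x)).
  - rewrite INR_IZR_INZ, Z2Nat.id by lia. apply ceil_lt.
  - replace (Z.to_nat (ceilZ x)) with 0%nat by lia. simpl. lra.
Qed.

Lemma INR_ceil_ge x : x <= INR (Z.to_nat (ceilZ x)).
Proof. eapply Rle_trans. apply ceil_ge. apply INR_to_nat_ge. Qed.

Lemma link1 n : link_size n 1 = (2 ^ n)%nat.
Proof. unfold link_size, floorZ. rewrite Rmult_1_r, Int_part_INR, Nat2Z.id. reflexivity. Qed.

Lemma eventually s k : s > k -> exists N, forall n, (N <= n)%nat -> INR n * s >= INR n * k + 1.
Proof.
  intro H. exists (Z.to_nat (up (/ (s - k)))). intros n Hn.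
  destruct (archimed (/ (s - k))) as [H1 _].
  assert (INR n > / (s - k)).
  { apply le_INR in Hn. pose proof (INR_to_nat_ge (up (/ (s - k)))). lra. }
  assert (INR n * (s - k) > / (s - k) * (s - k)).
  { apply Rmult_gt_compat_r; lra. }
  rewrite Rinv_l in H2 by lra. nra.
Qed.

Lemma err_half (P : ICInstance) Rs enc dec n :
  let l := tuples (msg_sizes n Rs) in
  (0 < length l)%nat ->
  (2 * length (filter (fun m => negb (decoding_error P enc dec n m)) l) <= length l)%nat ->
  error_prob P Rs enc dec n >= 1/2.
Proof.
  intros l H0 H. unfold error_prob. fold l.
  pose proof (filter_length (decoding_error P enc dec n) l) as E.
  remember (length (filter (fun m => negb (decoding_error P enc dec n m)) l)) as g.
  remember (length (filter (decoding_error P enc dec n) l)) as b.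
  remember (length l) as t.
  assert (2 * b >= t)%nat by lia.
  apply le_INR in H1. rewrite mult_INR in H1. simpl in H1.
  apply lt_INR in H0. simpl in H0.
  apply Rle_ge. apply Rmult_le_reg_r with (INR t); auto.
  replace (INR b / INR t * INR t) with (INR b) by (field; lra). lra.
Qed.

Lemma not_cv (u : nat -> R) : (exists N, forall n, (N <= n)%nat -> u n >= 1/2) -> ~ Un_cv u 0.
Proof.
  intros [N H] Hc. destruct (Hc (1/2)) as [N' H']. lra.
  specialize (H (max N N') ltac:(lia)). specialize (H' (max N N') ltac:(lia)).
  unfold R_dist in H'. rewrite Rminus_0_r in H'. apply Rabs_def2 in H'. lra.
Qed.
Lemma good_spec enc dec n a b c d :
  negb (decoding_error instance3 enc dec n [a;b;c;d]) = true ->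
  let L := [enc n 0%nat [a;b;c]; enc n 1%nat [b;c;d]] in
  dec n 0%nat L [d] = a /\ dec n 1%nat L [a;c] = b /\ dec n 2%nat L [a;b] = c /\ dec n 3%nat L [b;c] = d.
Proof.
  unfold decoding_error, sent, restrict. simpl.
  destruct (Nat.eqb_spec (dec n 0%nat [enc n 0%nat [a;b;c]; enc n 1%nat [b;c;d]] [d]) a);
  destruct (Nat.eqb_spec (dec n 1%nat [enc n 0%nat [a;b;c]; enc n 1%nat [b;c;d]] [a;c]) b);
  destruct (Nat.eqb_spec (dec n 2%nat [enc n 0%nat [a;b;c]; enc n 1%nat [b;c;d]] [a;b]) c);
  destruct (Nat.eqb_spec (dec n 3%nat [enc n 0%nat [a;b;c]; enc n 1%nat [b;c;d]] [b;c]) d);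
  simpl; intros; try discriminate; auto.
Qed.

Lemma valid_spec Rs enc n a b c d :
  encoders_valid instance3 Rs enc n -> In [a;b;c;d] (tuples (msg_sizes n Rs)) ->
  (enc n 0%nat [a;b;c] < 2^n)%nat /\ (enc n 1%nat [b;c;d] < 2^n)%nat.
Proof.
  intros H Hm. split.
  - specialize (H 0%nat _ ltac:(simpl; lia) Hm). simpl in H. rewrite link1 in H. exact H.
  - specialize (H 1%nat _ ltac:(simpl; lia) Hm). simpl in H. rewrite link1 in H. exact H.
Qed.

Lemma split_code e u v : (u < e)%nat -> ((u + v * e) mod e = u /\ (u + v * e) / e = v)%nat.
Proof.
  intro H. assert (e <> 0%nat) by lia. split.
  - rewrite Nat.Div0.mod_add. apply Nat.mod_small; auto.
  - rewrite Nat.div_add by auto. rewrite Nat.div_small by auto. reflexivity.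
Qed.

Lemma msg_pos n r : (0 < msg_size n r)%nat.
Proof. unfold msg_size. apply Nat.neq_0_lt_0, Nat.pow_nonzero. lia. Qed.

Lemma cz1_ge n r : INR n * r >= INR n * 1 + 1 -> (2 * 2 ^ n <= msg_size n r)%nat.
Proof.
  intro H. unfold msg_size. change (2 * 2 ^ n)%nat with (2 ^ S n)%nat.
  apply Nat.pow_le_mono_r. lia.
  apply INR_le. rewrite S_INR. pose proof (INR_ceil_ge (INR n * r)). lra.
Qed.

Lemma cz2_ge n r r' : INR n * (r + r') >= INR n * 2 + 1 ->
  (2 * (2 ^ n * 2 ^ n) <= msg_size n r * msg_size n r')%nat.
Proof.
  intro H. unfold msg_size. rewrite <- !Nat.pow_add_r.
  change (2 * 2 ^ (n + n))%nat with (2 ^ S (n + n))%nat.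
  apply Nat.pow_le_mono_r. lia.
  apply INR_le. rewrite S_INR, !plus_INR.
  pose proof (INR_ceil_ge (INR n * r)). pose proof (INR_ceil_ge (INR n * r')). lra.
Qed.

Lemma conv_core Rs enc dec n (K Jp : nat) (Rl : list (list nat)) phi psi :
  (length (tuples (msg_sizes n Rs)) = Jp * length Rl)%nat ->
  (2 * K <= Jp)%nat ->
  (forall m, In m (tuples (msg_sizes n Rs)) ->
     negb (decoding_error instance3 enc dec n m) = true ->
     psi (phi m) = m /\ (fst (phi m) < K)%nat /\ In (snd (phi m)) Rl) ->
  (0 < length (tuples (msg_sizes n Rs)))%nat ->
  error_prob instance3 Rs enc dec n >= 1/2.
Proof.
  intros HL HJ H Hp. apply err_half; auto.
  pose proof (count_inj _ _ phi psi K Rl (nodup_tuples _) H). nia.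
Qed.

Ltac in_tup := repeat (apply in_tuples_cons; eexists; eexists; split; [reflexivity|split;[eassumption|]]);
  apply in_tuples_nil; reflexivity.

Ltac c_len := rewrite !length_tuples; simpl; ring.
Ltac c_pos n r1 r2 r3 r4 := rewrite length_tuples; simpl; pose proof (msg_pos n r1); pose proof (msg_pos n r2);
    pose proof (msg_pos n r3); pose proof (msg_pos n r4); nia.
Ltac c_good r1 r2 r3 r4 enc dec n Hval :=
    let m := fresh "m" in let Hm := fresh "Hm" in let Hg := fresh "Hg" in
    intros m Hm Hg;
    change (msg_sizes n [r1;r2;r3;r4]) with
      [msg_size n r1; msg_size n r2; msg_size n r3; msg_size n r4] in *;
    pose proof Hm as Hm';
    apply in_tuples4 in Hm; destruct Hm as [a [b [c [d [-> [Ha [Hb [Hc Hd]]]]]]]];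
    destruct (valid_spec _ _ _ _ _ _ _ (Hval n) Hm') as [V1 V2];
    apply good_spec in Hg; destruct Hg as [G1 [G2 [G3 G4]]].

Lemma converse r1 r2 r3 r4 : achievable instance3 [r1;r2;r3;r4] ->
  r1 <= 1 /\ r4 <= 1 /\ r1 + r2 <= 2 /\ r1 + r3 <= 2 /\ r2 + r4 <= 2 /\ r3 + r4 <= 2.
Proof.
  intros [_ [_ [enc [dec [Hval Hcv]]]]].
  repeat split; apply Rnot_lt_le; intro Hgt; revert Hcv; apply not_cv.
  - destruct (eventually r1 1 Hgt) as [N HN]. exists N. intros n Hn.
    apply conv_core with (K := (2 ^ n)%nat) (Jp := msg_size n r1)
      (Rl := tuples [msg_size n r2; msg_size n r3; msg_size n r4])
      (phi := fun m => (enc n 0%nat (restrict [0;1;2]%nat m), restrict [1;2;3]%nat m))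
      (psi := fun p => [dec n 0%nat [fst p; enc n 1%nat (snd p)] [nth 2 (snd p) 0%nat];
                        nth 0 (snd p) 0%nat; nth 1 (snd p) 0%nat; nth 2 (snd p) 0%nat]%nat);
    [c_len | apply cz1_ge; auto | c_good r1 r2 r3 r4 enc dec n Hval | c_pos n r1 r2 r3 r4].
    cbn [fst snd restrict map nth]. rewrite G1. split; auto. split; auto. in_tup.
  - destruct (eventually r4 1 Hgt) as [N HN]. exists N. intros n Hn.
    apply conv_core with (K := (2 ^ n)%nat) (Jp := msg_size n r4)
      (Rl := tuples [msg_size n r1; msg_size n r2; msg_size n r3])
      (phi := fun m => (enc n 1%nat (restrict [1;2;3]%nat m), restrict [0;1;2]%nat m))
      (psi := fun p => [nth 0 (snd p) 0; nth 1 (snd p) 0; nth 2 (snd p) 0;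
                        dec n 3%nat [enc n 0%nat (snd p); fst p] [nth 1 (snd p) 0; nth 2 (snd p) 0]]%nat);
    [c_len | apply cz1_ge; auto | c_good r1 r2 r3 r4 enc dec n Hval | c_pos n r1 r2 r3 r4].
    cbn [fst snd restrict map nth]. rewrite G4. split; auto. split; auto. in_tup.
  - destruct (eventually (r1 + r2) 2 Hgt) as [N HN]. exists N. intros n Hn.
    apply conv_core with (K := (2 ^ n * 2 ^ n)%nat) (Jp := (msg_size n r1 * msg_size n r2)%nat)
      (Rl := tuples [msg_size n r3; msg_size n r4])
      (phi := fun m => (enc n 0%nat (restrict [0;1;2]%nat m) + enc n 1%nat (restrict [1;2;3]%nat m) * 2 ^ n,
                        restrict [2;3]%nat m)%nat)
      (psi := fun p => let L := [fst p mod 2 ^ n; fst p / 2 ^ n]%nat in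
                       let a' := dec n 0%nat L [nth 1 (snd p) 0%nat] in
                       [a'; dec n 1%nat L [a'; nth 0 (snd p) 0%nat]; nth 0 (snd p) 0%nat; nth 1 (snd p) 0%nat]);
    [c_len | apply cz2_ge; auto | c_good r1 r2 r3 r4 enc dec n Hval | c_pos n r1 r2 r3 r4].
    cbn [fst snd restrict map nth]. destruct (split_code (2 ^ n) (enc n 0%nat [a;b;c]) (enc n 1%nat [b;c;d]) V1) as [E1 E2].
    rewrite E1, E2, G1, G2. split; auto. split. nia. in_tup.
  - destruct (eventually (r1 + r3) 2 Hgt) as [N HN]. exists N. intros n Hn.
    apply conv_core with (K := (2 ^ n * 2 ^ n)%nat) (Jp := (msg_size n r1 * msg_size n r3)%nat)
      (Rl := tuples [msg_size n r2; msg_size n r4])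
      (phi := fun m => (enc n 0%nat (restrict [0;1;2]%nat m) + enc n 1%nat (restrict [1;2;3]%nat m) * 2 ^ n,
                        restrict [1;3]%nat m)%nat)
      (psi := fun p => let L := [fst p mod 2 ^ n; fst p / 2 ^ n]%nat in
                       let a' := dec n 0%nat L [nth 1 (snd p) 0%nat] in
                       [a'; nth 0 (snd p) 0%nat; dec n 2%nat L [a'; nth 0 (snd p) 0%nat]; nth 1 (snd p) 0%nat]);
    [c_len | apply cz2_ge; auto | c_good r1 r2 r3 r4 enc dec n Hval | c_pos n r1 r2 r3 r4].
    cbn [fst snd restrict map nth]. destruct (split_code (2 ^ n) (enc n 0%nat [a;b;c]) (enc n 1%nat [b;c;d]) V1) as [E1 E2].
    rewrite E1, E2, G1, G3. split; auto. split. nia. in_tup.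
  - destruct (eventually (r2 + r4) 2 Hgt) as [N HN]. exists N. intros n Hn.
    apply conv_core with (K := (2 ^ n * 2 ^ n)%nat) (Jp := (msg_size n r2 * msg_size n r4)%nat)
      (Rl := tuples [msg_size n r1; msg_size n r3])
      (phi := fun m => (enc n 0%nat (restrict [0;1;2]%nat m) + enc n 1%nat (restrict [1;2;3]%nat m) * 2 ^ n,
                        restrict [0;2]%nat m)%nat)
      (psi := fun p => let L := [fst p mod 2 ^ n; fst p / 2 ^ n]%nat in
                       let b' := dec n 1%nat L [nth 0 (snd p) 0%nat; nth 1 (snd p) 0%nat] in
                       [nth 0 (snd p) 0%nat; b'; nth 1 (snd p) 0%nat; dec n 3%nat L [b'; nth 1 (snd p) 0%nat]]);
    [c_len | apply cz2_ge; auto | c_good r1 r2 r3 r4 enc dec n Hval | c_pos n r1 r2 r3 r4].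
    cbn [fst snd restrict map nth]. destruct (split_code (2 ^ n) (enc n 0%nat [a;b;c]) (enc n 1%nat [b;c;d]) V1) as [E1 E2].
    rewrite E1, E2, G2, G4. split; auto. split. nia. in_tup.
  - destruct (eventually (r3 + r4) 2 Hgt) as [N HN]. exists N. intros n Hn.
    apply conv_core with (K := (2 ^ n * 2 ^ n)%nat) (Jp := (msg_size n r3 * msg_size n r4)%nat)
      (Rl := tuples [msg_size n r1; msg_size n r2])
      (phi := fun m => (enc n 0%nat (restrict [0;1;2]%nat m) + enc n 1%nat (restrict [1;2;3]%nat m) * 2 ^ n,
                        restrict [0;1]%nat m)%nat)
      (psi := fun p => let L := [fst p mod 2 ^ n; fst p / 2 ^ n]%nat in
                       let c' := dec n 2%nat L [nth 0 (snd p) 0%nat; nth 1 (snd p) 0%nat] in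
                       [nth 0 (snd p) 0%nat; nth 1 (snd p) 0%nat; c'; dec n 3%nat L [nth 1 (snd p) 0%nat; c']]);
    [c_len | apply cz2_ge; auto | c_good r1 r2 r3 r4 enc dec n Hval | c_pos n r1 r2 r3 r4].
    cbn [fst snd restrict map nth]. destruct (split_code (2 ^ n) (enc n 0%nat [a;b;c]) (enc n 1%nat [b;c;d]) V1) as [E1 E2].
    rewrite E1, E2, G3, G4. split; auto. split. nia. in_tup.
Qed.

Local Open Scope nat_scope.

Definition unadd (N z y : nat) : nat := (z + (N - y)) mod N.

Lemma unadd_l N x y : x < N -> y < N -> unadd N ((x + y) mod N) y = x.
Proof.
  intros Hx Hy. unfold unadd. rewrite Nat.Div0.add_mod_idemp_l.
  replace (x + y + (N - y)) with (x + 1 * N) by lia.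
  rewrite Nat.Div0.mod_add. apply Nat.mod_small; auto.
Qed.

Lemma unadd_r N x y : x < N -> y < N -> unadd N ((x + y) mod N) x = y.
Proof. intros. rewrite Nat.add_comm. apply unadd_l; auto. Qed.

Definition encA (e g : nat) (x : list nat) : nat :=
  let W := (nth 1 x 0 + nth 2 x 0) mod (e * (g * g)) in
  (nth 0 x 0 + W mod e) mod e + ((W / e) mod g) * e.

Definition encB (e g : nat) (x : list nat) : nat :=
  let W := (nth 0 x 0 + nth 1 x 0) mod (e * (g * g)) in
  (nth 2 x 0 + W mod e) mod e + ((W / e) / g) * e.

Definition decX (e g j : nat) (L s : list nat) : nat :=
  let L1 := nth 0 L 0 in let L2 := nth 1 L 0 in let N2 := e * (g * g) in
  match j with
  | 0 => unadd e (L1 mod e) (unadd e (L2 mod e) (nth 0 s 0))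
  | 1 => unadd N2 (unadd e (L1 mod e) (nth 0 s 0) + e * (L1 / e + g * (L2 / e))) (nth 1 s 0)
  | 2 => unadd N2 (unadd e (L1 mod e) (nth 0 s 0) + e * (L1 / e + g * (L2 / e))) (nth 1 s 0)
  | _ => unadd e (L2 mod e) (((nth 0 s 0 + nth 1 s 0) mod N2) mod e)
  end.

Lemma core e g a b c d : 0 < e -> 0 < g -> a < e -> d < e -> b < e * (g * g) -> c < e * (g * g) ->
  let L := [encA e g [a;b;c]; encB e g [b;c;d]] in
  encA e g [a;b;c] < e * g /\ encB e g [b;c;d] < e * g /\
  decX e g 0 L [d] = a /\ decX e g 1 L [a;c] = b /\ decX e g 2 L [a;b] = c /\ decX e g 3 L [b;c] = d.
Proof.
  intros He Hg Ha Hd Hb Hc L. unfold L, encA, encB, decX. cbn [nth].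
  set (N2 := e * (g * g)).
  set (W := (b + c) mod N2).
  assert (HW : W < N2) by (apply Nat.mod_upper_bound; unfold N2; nia).
  set (P := W mod e). assert (HP : P < e) by (apply Nat.mod_upper_bound; lia).
  set (Q := W / e).
  assert (HQ : Q < g * g) by (apply Nat.Div0.div_lt_upper_bound; unfold N2 in HW; lia).
  set (Q1 := Q mod g). assert (HQ1 : Q1 < g) by (apply Nat.mod_upper_bound; lia).
  set (Q2 := Q / g). assert (HQ2 : Q2 < g) by (apply Nat.Div0.div_lt_upper_bound; lia).
  set (u1 := (a + P) mod e). assert (Hu1 : u1 < e) by (apply Nat.mod_upper_bound; lia).
  set (u2 := (d + P) mod e). assert (Hu2 : u2 < e) by (apply Nat.mod_upper_bound; lia).
  destruct (split_code e u1 Q1 Hu1) as [E1 F1].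
  destruct (split_code e u2 Q2 Hu2) as [E2 F2].
  rewrite E1, F1, E2, F2.
  assert (EP : unadd e u1 a = P) by (apply unadd_r; auto).
  assert (EQ : P + e * (Q1 + g * Q2) = W).
  { replace (Q1 + g * Q2) with Q by (unfold Q1, Q2; pose proof (Nat.div_mod_eq Q g); lia).
    unfold P, Q. pose proof (Nat.div_mod_eq W e); lia. }
  rewrite EP, EQ.
  split. nia. split. nia.
  split. unfold u2. rewrite unadd_r by auto. unfold u1. apply unadd_l; auto.
  split. unfold W. apply unadd_l; auto.
  split. unfold W. apply unadd_r; auto.
  unfold u2. fold W. fold P. apply unadd_l; auto.
Qed.

Definition cz (n : nat) (r : R) : nat := Z.to_nat (ceilZ (INR n * r)).
Definition TT (ra rd : R) (n : nat) : nat := max (cz n ra) (cz n rd).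

Definition enc3 (ra rd : R) : Encoders := fun n k x =>
  let T := TT ra rd n in let e := 2 ^ T in let g := 2 ^ (n - T) in
  let v := match k with 0 => encA e g x | _ => encB e g x end in
  if v <? 2 ^ n then v else 0.

Definition dec3 (ra rd : R) : Decoders := fun n j L s =>
  let T := TT ra rd n in decX (2 ^ T) (2 ^ (n - T)) j L s.

Arguments enc3 : simpl never.
Arguments dec3 : simpl never.

Lemma cz_lt n r : (0 <= r)%R -> (INR (cz n r) < INR n * r + 1)%R.
Proof. intro. apply INR_ceil_lt. pose proof (pos_INR n). nra. Qed.

Lemma filter_nil {A} (f : A -> bool) l : (forall x, In x l -> f x = false) -> filter f l = [].
Proof.
  induction l as [|x l IH]; simpl; intros H; auto.
  rewrite H by auto. apply IH. intros; apply H; auto.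
Qed.

Lemma achieve (a b c d δ : R) : (0 < δ)%R -> (0 <= a)%R -> (0 <= b)%R -> (0 <= c)%R -> (0 <= d)%R ->
  (a <= 1 - δ)%R -> (d <= 1 - δ)%R -> (a + b <= 2 - 2 * δ)%R -> (a + c <= 2 - 2 * δ)%R ->
  (b + d <= 2 - 2 * δ)%R -> (c + d <= 2 - 2 * δ)%R ->
  achievable instance3 [a;b;c;d].
Proof.
  intros Hδ Ha Hb Hc Hd H1 H2 H3 H4 H5 H6.
  split. reflexivity. split.
  { intros r Hr. simpl in Hr. intuition subst; auto. }
  exists (enc3 a d), (dec3 a d). split.
  { intros n k m Hk Hm.
    assert (Ek : nth k (ic_C instance3) 0%R = 1%R).
    { simpl in Hk. destruct k as [|[|k]]; try reflexivity; lia. }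
    rewrite Ek, link1. unfold enc3.
    destruct (Nat.ltb_spec (match k with 0 => encA (2 ^ TT a d n) (2 ^ (n - TT a d n))
       (restrict (nth k (ic_S instance3) []) m) | S _ => encB (2 ^ TT a d n) (2 ^ (n - TT a d n))
       (restrict (nth k (ic_S instance3) []) m) end) (2 ^ n)); auto.
    apply Nat.neq_0_lt_0, Nat.pow_nonzero. lia. }
  intros eps Heps.
  destruct (eventually δ 0 Hδ) as [N HN]. exists N. intros n Hn.
  specialize (HN n Hn). rewrite Rmult_0_r, Rplus_0_l in HN.
  pose proof (pos_INR n) as Hn0.
  pose proof (cz_lt n a Ha) as Ca. pose proof (cz_lt n b Hb) as Cb.
  pose proof (cz_lt n c Hc) as Cc. pose proof (cz_lt n d Hd) as Cd.
  assert (HA : (cz n a < n)%nat). { apply INR_lt. nra. }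
  assert (HD : (cz n d < n)%nat). { apply INR_lt. nra. }
  assert (HAB : (cz n a + cz n b < 2 * n)%nat).
  { apply INR_lt. rewrite plus_INR, mult_INR. replace (INR 2) with 2%R by (simpl; lra). nra. }
  assert (HAC : (cz n a + cz n c < 2 * n)%nat).
  { apply INR_lt. rewrite plus_INR, mult_INR. replace (INR 2) with 2%R by (simpl; lra). nra. }
  assert (HBD : (cz n b + cz n d < 2 * n)%nat).
  { apply INR_lt. rewrite plus_INR, mult_INR. replace (INR 2) with 2%R by (simpl; lra). nra. }
  assert (HCD : (cz n c + cz n d < 2 * n)%nat).
  { apply INR_lt. rewrite plus_INR, mult_INR. replace (INR 2) with 2%R by (simpl; lra). nra. }
  set (T := TT a d n) in *.
  assert (HT : (T <= n)%nat) by (unfold T, TT; lia).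
  set (e := 2 ^ T). set (g := 2 ^ (n - T)).
  assert (He : (0 < e)%nat) by (apply Nat.neq_0_lt_0, Nat.pow_nonzero; lia).
  assert (Hg : (0 < g)%nat) by (apply Nat.neq_0_lt_0, Nat.pow_nonzero; lia).
  assert (En : 2 ^ n = e * g).
  { unfold e, g. rewrite <- Nat.pow_add_r. f_equal. lia. }
  assert (EN2 : e * (g * g) = 2 ^ (T + (n - T) + (n - T))).
  { unfold e, g. rewrite !Nat.pow_add_r. ring. }
  assert (Herr : error_prob instance3 [a;b;c;d] (enc3 a d) (dec3 a d) n = 0%R).
  { unfold error_prob. rewrite filter_nil. simpl. unfold Rdiv. apply Rmult_0_l.
    intros m Hm. change (msg_sizes n [a;b;c;d]) with
      [msg_size n a; msg_size n b; msg_size n c; msg_size n d] in Hm.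
    apply in_tuples4 in Hm. destruct Hm as [x1 [x2 [x3 [x4 [-> [B1 [B2 [B3 B4]]]]]]]].
    unfold msg_size in B1, B2, B3, B4. fold (cz n a) (cz n b) (cz n c) (cz n d) in *.
    assert (X1 : x1 < e).
    { apply Nat.lt_le_trans with (1 := B1). apply Nat.pow_le_mono_r; unfold T, TT; lia. }
    assert (X4 : x4 < e).
    { apply Nat.lt_le_trans with (1 := B4). apply Nat.pow_le_mono_r; unfold T, TT; lia. }
    assert (X2 : x2 < e * (g * g)).
    { rewrite EN2. apply Nat.lt_le_trans with (1 := B2). apply Nat.pow_le_mono_r; unfold T, TT in *; lia. }
    assert (X3 : x3 < e * (g * g)).
    { rewrite EN2. apply Nat.lt_le_trans with (1 := B3). apply Nat.pow_le_mono_r; unfold T, TT in *; lia. }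
    destruct (core e g x1 x2 x3 x4 He Hg X1 X4 X2 X3) as [K1 [K2 [D1 [D2 [D3 D4]]]]].
    assert (EE1 : enc3 a d n 0 [x1;x2;x3] = encA e g [x1;x2;x3]).
    { unfold enc3. fold T e g. rewrite En. destruct (Nat.ltb_spec (encA e g [x1;x2;x3]) (e * g)); lia. }
    assert (EE2 : enc3 a d n 1 [x2;x3;x4] = encB e g [x2;x3;x4]).
    { unfold enc3. fold T e g. rewrite En. destruct (Nat.ltb_spec (encB e g [x2;x3;x4]) (e * g)); lia. }
    unfold decoding_error, sent, restrict. simpl. rewrite EE1, EE2.
    unfold dec3. fold T e g. rewrite D1, D2, D3, D4. rewrite !Nat.eqb_refl. reflexivity. }
  unfold R_dist. rewrite Herr, Rminus_0_r, Rabs_R0. exact Heps.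
Qed.

Lemma le_eps (x y : R) : (forall eps, (0 < eps)%R -> (x <= y + eps)%R) -> (x <= y)%R.
Proof.
  intro H. destruct (Rle_lt_dec x y); auto.
  specialize (H ((x - y) / 2)%R ltac:(lra)). lra.
Qed.

Open Scope R_scope.

Theorem mainTheorem3 (R1 R2 R3 R4 : R) :
  in_capacity_region instance3 [R1; R2; R3; R4] <->
  (0 <= R1 /\ 0 <= R2 /\ 0 <= R3 /\ 0 <= R4 /\
   R1 <= 1 /\ R4 <= 1 /\ R1 + R2 <= 2 /\ R1 + R3 <= 2 /\
   R2 + R4 <= 2 /\ R3 + R4 <= 2).
Proof.
  split.
  - intros [_ H].
    assert (key : forall eps, (0 < eps)%R -> exists r1 r2 r3 r4,
      (0 <= r1 /\ 0 <= r2 /\ 0 <= r3 /\ 0 <= r4)%R /\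
      (r1 <= 1 /\ r4 <= 1 /\ r1 + r2 <= 2 /\ r1 + r3 <= 2 /\ r2 + r4 <= 2 /\ r3 + r4 <= 2)%R /\
      (Rabs (R1 - r1) < eps /\ Rabs (R2 - r2) < eps /\ Rabs (R3 - r3) < eps /\ Rabs (R4 - r4) < eps)%R).
    { intros eps Heps. destruct (H eps Heps) as [Rs' [Hach Hcl]].
      pose proof Hach as [Hlen [Hnn _]].
      destruct Rs' as [|r1 [|r2 [|r3 [|r4 [|r5 l]]]]]; try discriminate.
      exists r1, r2, r3, r4. split.
      { repeat split; apply Hnn; simpl; tauto. }
      split. apply converse; auto.
      repeat split; [apply (Hcl 0%nat) | apply (Hcl 1%nat) | apply (Hcl 2%nat) | apply (Hcl 3%nat)];
        simpl; lia. }
    repeat split; apply le_eps; intros eps Heps;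
      destruct (key (eps / 2)%R ltac:(lra)) as [r1 [r2 [r3 [r4 [[? [? [? ?]]]
        [[? [? [? [? [? ?]]]]] [A1 [A2 [A3 A4]]]]]]]]];
      apply Rabs_def2 in A1; apply Rabs_def2 in A2; apply Rabs_def2 in A3; apply Rabs_def2 in A4;
      lra.
  - intros [P1 [P2 [P3 [P4 [H1 [H2 [H3 [H4 [H5 H6]]]]]]]]].
    split. reflexivity. intros eps Heps.
    set (δ := Rmin (1/2) (eps / 4)).
    assert (Hd1 : (0 < δ)%R) by (unfold δ; apply Rmin_glb_lt; lra).
    assert (Hd2 : (δ <= 1/2)%R) by (unfold δ; apply Rmin_l).
    assert (Hd3 : (δ <= eps/4)%R) by (unfold δ; apply Rmin_r).
    exists [((1 - δ) * R1)%R; ((1 - δ) * R2)%R; ((1 - δ) * R3)%R; ((1 - δ) * R4)%R].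
    split.
    + apply achieve with (δ := δ); auto; nra.
    + intros j Hj. simpl in Hj.
      assert (forall r, (0 <= r)%R -> (r <= 2)%R -> (Rabs (r - (1 - δ) * r) < eps)%R).
      { intros r Hr0 Hr2. apply Rabs_def1; nra. }
      destruct j as [|[|[|[|j]]]]; simpl; try lia; apply H; auto; lra.
Qed.
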